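(* Let $R$ be a ring, $n\ge 2$, and let $A=(a_{ij})\in\mathbb{M}_n(R)$ be a matrix such that $a_{i+1,i}=1$ for $1\le i\le n-1$ and $a_{ij}=0$ whenever $i>j+1$ (the entries $a_{ij}$ with $i\le j$ are arbitrary). Then for each $k=1,\dots,n$, the entries of $A^k=(b_{ij})$ satisfy: $b_{k+j-1,\,j}=a_{jj}+a_{j+1,j+1}+\cdots+a_{j+k-1,j+k-1}$ for $1\le j\le n-k+1$; $b_{k+j,\,j}=1$ for $1\le j\le n-k$; and $b_{ij}=0$ whenever $i>k+j$. In particular, the $(k,1)$-entry of $A^k$ is $a_{11}+\cdots+a_{kk}$, and the $(n,1)$-entry of $A^n$ is $a_{11}+\cdots+a_{nn}$.
   Context: All rings are associative with identity; $\mathbb{M}_n(R)$ denotes the ring of $n\times n$ matrices over $R$. *)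

(* Defs.v *)
From mathcomp Require Import all_boot all_algebra.
Set Implicit Arguments.
Unset Strict Implicit.
Unset Printing Implicit Defensive.

(* Main.v *)
Require Import Defs.
From mathcomp Require Import all_boot all_algebra.
From mathcomp Require Import zify.
Import GRing.Theory.
Local Open Scope ring_scope.

Section S.
Variables (R : pzRingType) (m : nat) (A : 'M[R]_m.+2).
Hypothesis Hsub : forall i j : 'I_m.+2, (i = j.+1 :> nat) -> A i j = 1.
Hypothesis Hlow : forall i j : 'I_m.+2, (j.+1 < i)%N -> A i j = 0.

Definition P k := [/\ (forall i j : 'I_m.+2, (i = k + j - 1 :> nat)%N ->
            (A ^+ k) i j = \sum_(l < m.+2 | (j <= l < j + k)%N) A l l),
         (forall i j : 'I_m.+2, (i = k + j :> nat)%N -> (A ^+ k) i j = 1)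
       & (forall i j : 'I_m.+2, (k + j < i)%N -> (A ^+ k) i j = 0)].

Lemma mainP k : P k.+1.
Proof.
elim: k => [|k [IH1 IH2 IH3]].
  split; rewrite expr1.
  - move=> i j Hi; rewrite (big_pred1 j); first by congr (A _ _); apply: val_inj => /=; lia.
    move=> l /=; apply/idP/eqP => [H|->]; last by rewrite leqnn addn1 ltnSn.
    apply: val_inj => /=; lia.
  - move=> i j Hi; apply: Hsub; lia.
  - move=> i j Hi; apply: Hlow; lia.
have mulE : forall i j, (A ^+ k.+2) i j = \sum_l (A ^+ k.+1) i l * A l j.
  by move=> i j; rewrite exprSr -mulmxE mxE.
split.
- move=> i j Hi; rewrite mulE.
  have Hj1 : (j.+1 < m.+2)%N by have := ltn_ord i; lia.
  pose j1 : 'I_m.+2 := Ordinal Hj1.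
  rewrite (bigD1 j) //= (bigD1 j1) /=; last by apply/eqP => /(congr1 val) /=; lia.
  rewrite big1 ?addr0; last first.
    move=> l /andP [/eqP Hl2 /eqP Hl1].
    have [Hl|Hl] := leqP l j.+1.
      rewrite IH3 ?mul0r //.
      have : (l : nat) <> j by move=> E; apply: Hl2; apply: val_inj.
      have : (l : nat) <> j.+1 by move=> E; apply: Hl1; apply: val_inj.
      lia.
    by rewrite Hlow ?mulr0.
  rewrite IH2; last by lia.
  rewrite (IH1 i j1); last by rewrite /=; lia.
  rewrite (Hsub j1 j) // mulr1 mul1r.
  rewrite [RHS](bigD1 j) /=; last by rewrite leqnn; lia.
  congr (_ + _); apply: eq_bigl => l /=.
  rewrite -(inj_eq val_inj) /=; lia.
- move=> i j Hi; rewrite mulE.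
  have Hj1 : (j.+1 < m.+2)%N by have := ltn_ord i; lia.
  pose j1 : 'I_m.+2 := Ordinal Hj1.
  rewrite (bigD1 j1) //= big1 ?addr0; last first.
    move=> l /eqP Hl1.
    have [Hl|Hl] := leqP l j.+1.
      rewrite IH3 ?mul0r //.
      have : (l : nat) <> j.+1 by move=> E; apply: Hl1; apply: val_inj.
      lia.
    by rewrite Hlow ?mulr0.
  by rewrite IH2 /= ?Hsub ?mulr1 //; lia.
- move=> i j Hi; rewrite mulE big1 // => l _.
  have [Hl|Hl] := leqP l j.+1.
    by rewrite IH3 ?mul0r //; lia.
  by rewrite Hlow ?mulr0.
Qed.
End S.

(* n = m.+2 (so n >= 2); indices are 0-based: paper's a_{ij} is A (i-1) (j-1). *)
Theorem lemma3p4 (R : pzRingType) (m : nat) (A : 'M[R]_m.+2)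
  (Hsub : forall i j : 'I_m.+2, (i = j.+1 :> nat) -> A i j = 1)
  (Hlow : forall i j : 'I_m.+2, (j.+1 < i)%N -> A i j = 0) :
  (forall k : nat, (1 <= k <= m.+2)%N ->
     [/\ (forall i j : 'I_m.+2, (i = k + j - 1 :> nat)%N ->
            (A ^+ k) i j = \sum_(l < m.+2 | (j <= l < j + k)%N) A l l),
         (forall i j : 'I_m.+2, (i = k + j :> nat)%N -> (A ^+ k) i j = 1)
       & (forall i j : 'I_m.+2, (k + j < i)%N -> (A ^+ k) i j = 0)])
  /\ (forall k : nat, (1 <= k <= m.+2)%N ->
        (A ^+ k) (inord k.-1) ord0 = \sum_(l < m.+2 | (l < k)%N) A l l)
  /\ (A ^+ m.+2) ord_max ord0 = \sum_(l < m.+2) A l l.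
Proof.
have H1 : forall k, (1 <= k <= m.+2)%N -> @P R m A k.
  by case=> [//|k] _; exact: (@mainP R m A Hsub Hlow k).
split; first exact: H1.
split.
  move=> k Hk; have [D _ _] := H1 k Hk.
  rewrite D; last by rewrite inordK /=; lia.
  by apply: eq_bigl => l /=; rewrite add0n.
have [D _ _] := H1 m.+2 (leqnn _).
rewrite D; last by rewrite /=; lia.
by apply: eq_bigl => l /=; rewrite add0n ltn_ord.
Qed.
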